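(* Let $J\subset R$ be a graded ideal with $\sigma(J)\subset J$ such that $J$ is generated, as an ideal, by $\bigcup_{k\ge0}\sigma^k\big(\bigoplus_{d\ge0}J(d)_d\big)$, where $J(d)=J\cap R(d)$. Then there exists a unique graded two-sided ideal $I\subset F$ with $J=L(I)$.
   Context: Let $\mathbb K$ be a field and $F=\mathbb K\langle x_1,\dots,x_n\rangle$ with standard grading. Let $P=\mathbb K[x_{ij}\mid 1\le i\le n,\ j\ge1]$ with $\deg x_{ij}=1$, $Q$ the ideal generated by all $x_{ij}x_{kj}$, $R=P/Q$, $\sigma:R\to R$ the algebra endomorphism $x_{ij}\mapsto x_{i,j+1}$, and $\iota:F\to R$ the $\mathbb K$-linear map $x_{i_1}\cdots x_{i_d}\mapsto x_{i_11}x_{i_22}\cdots x_{i_dd}$. $R(d)$ is the subalgebra of $R$ generated by the $x_{ij}$ with $j\le d$. For a graded two-sided ideal $I\subset F$, $L(I)$ is the ideal of $R$ generated by $\bigcup_{k\ge0}\sigma^k(\iota(I))$. *)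

(* Defs.v *)
From HB Require Import structures.
From mathcomp Require Import all_boot all_order all_algebra.
Set Implicit Arguments. Unset Strict Implicit. Unset Printing Implicit Defensive.
Import GRing.Theory.
Local Open Scope ring_scope.

Section Defs.
Variables (K : fieldType) (n : nat).

(* A word x_{i_1}...x_{i_d} is the sequence [:: i_1; ...; i_d] (variables
   indexed by 'I_n).  Elements are coefficient functions word -> K; the
   polynomials are the finitely supported ones. *)
Definition word := seq 'I_n.
Definition Fser := word -> K.
Definition F_finsupp (f : Fser) : Prop :=
  exists s : seq word, forall w, f w != 0 -> w \in s.
Definition Fzero : Fser := fun _ => 0.
Definition Fadd (f g : Fser) : Fser := fun w => f w + g w.
Definition Fmul (f g : Fser) : Fser :=
  fun w => \sum_(i < (size w).+1) f (take i w) * g (drop i w).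
Definition Fhcomp (d : nat) (f : Fser) : Fser :=
  fun w => if size w == d then f w else 0.

Definition F_ideal (I : Fser -> Prop) : Prop :=
  [/\ forall f, I f -> F_finsupp f,
      I Fzero,
      forall f g, I f -> I g -> I (Fadd f g),
      forall a f, F_finsupp a -> I f -> I (Fmul a f)
    & forall f a, F_finsupp a -> I f -> I (Fmul f a)].
Definition F_graded_ideal (I : Fser -> Prop) : Prop :=
  F_ideal I /\ forall f d, I f -> I (Fhcomp d f).

(* Q is the monomial ideal generated by all x_ij x_kj, so R has as K-basis
   the monomials with at most one variable (of exponent 1) in each column j.
   Such a monomial is encoded by s : seq (option 'I_n) where the entry at
   position j-1 is Some i iff x_ij occurs; canonical form: no trailing None. *)
Definition canon (s : seq (option 'I_n)) : bool :=
  if rev s is None :: _ then false else true.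
Fixpoint dropNone (s : seq (option 'I_n)) : seq (option 'I_n) :=
  if s is None :: t then dropNone t else s.
Definition trim (s : seq (option 'I_n)) := rev (dropNone (rev s)).
Lemma canon_trim s : canon (trim s).
Proof. rewrite /canon /trim revK; by elim: (rev s) => [|[a|] t IH]. Qed.

Definition mon := {s : seq (option 'I_n) | canon s}.
Definition mkmon (s : seq (option 'I_n)) : mon := exist _ (trim s) (canon_trim s).
Definition mdeg (m : mon) : nat := count (fun o : option 'I_n => o != None) (val m).

Definition Rser := mon -> K.
Definition R_finsupp (f : Rser) : Prop :=
  exists s : seq mon, forall m, f m != 0 -> m \in s.
Definition Rzero : Rser := fun _ => 0.
Definition Radd (f g : Rser) : Rser := fun m => f m + g m.
Fixpoint splits (s : seq (option 'I_n)) :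
    seq (seq (option 'I_n) * seq (option 'I_n)) :=
  match s with
  | [::] => [:: ([::], [::])]
  | None :: t => [seq (None :: p.1, None :: p.2) | p <- splits t]
  | Some i :: t => [seq (Some i :: p.1, None :: p.2) | p <- splits t]
                   ++ [seq (None :: p.1, Some i :: p.2) | p <- splits t]
  end.
Definition Rmul (f g : Rser) : Rser :=
  fun m => \sum_(p <- splits (val m)) f (mkmon p.1) * g (mkmon p.2).
Definition Rhcomp (d : nat) (f : Rser) : Rser :=
  fun m => if mdeg m == d then f m else 0.

Definition R_ideal (J : Rser -> Prop) : Prop :=
  [/\ forall f, J f -> R_finsupp f,
      J Rzero,
      forall f g, J f -> J g -> J (Radd f g)
    & forall a f, R_finsupp a -> J f -> J (Rmul a f)].
Definition R_graded_ideal (J : Rser -> Prop) : Prop :=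
  R_ideal J /\ forall f d, J f -> J (Rhcomp d f).
Definition R_gen (S : Rser -> Prop) (f : Rser) : Prop :=
  forall J, R_ideal J -> (forall g, S g -> J g) -> J f.

(* sigma : x_ij |-> x_{i,j+1}  (shifts every monomial one column right) *)
Definition Rsigma (f : Rser) : Rser :=
  fun m => if val m is Some _ :: _ then 0 else f (mkmon (behead (val m))).
(* iota : x_{i_1}...x_{i_d} |-> x_{i_1 1} ... x_{i_d d}, extended linearly *)
Definition Riota (f : Fser) : Rser :=
  fun m => if all (fun o : option 'I_n => o != None) (val m)
           then f (pmap id (val m)) else 0.
(* f lies in R(d): only variables x_ij with j <= d occur *)
Definition inRd (d : nat) (f : Rser) : Prop :=
  forall m, (d < size (val m))%N -> f m = 0.

Definition Lideal (I : Fser -> Prop) : Rser -> Prop :=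
  R_gen (fun g => exists k f, I f /\ g = iter k Rsigma (Riota f)).

Definition Jdd (J : Rser -> Prop) (d : nat) (f : Rser) : Prop :=
  [/\ J f, inRd d f & Rhcomp d f =1 f].
Definition dsum_Jdd (J : Rser -> Prop) (f : Rser) : Prop :=
  R_finsupp f /\ forall d, Jdd J d (Rhcomp d f).
Definition Jgens (J : Rser -> Prop) (g : Rser) : Prop :=
  exists k f, dsum_Jdd J f /\ g = iter k Rsigma f.

End Defs.

(* Main.v *)
Require Import Defs.
From mathcomp Require Import all_boot all_order all_algebra.
From Stdlib Require Import FunctionalExtensionality.
From mathcomp Require Import zify.
Set Implicit Arguments. Unset Strict Implicit. Unset Printing Implicit Defensive.
Import GRing.Theory.
Local Open Scope ring_scope.

Section Seqs.
Variable n : nat.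
Implicit Types (s t a P l r : seq (option 'I_n)).

Definition isN (o : option 'I_n) := o == None.

Lemma dropNone_cat l r :
  dropNone (l ++ r) = if dropNone l == [::] then dropNone r else dropNone l ++ r.
Proof. by elim: l => [|[x|] l IH] //=. Qed.

Lemma trim_nil : trim [::] = [::] :> seq (option 'I_n).
Proof. by []. Qed.

Lemma trim_cons x s :
  trim (x :: s) = if (x == None) && (trim s == [::]) then [::] else x :: trim s.
Proof.
rewrite {1}/trim rev_cons -cats1 dropNone_cat.
have -> : trim s = rev (dropNone (rev s)) by [].
case: (dropNone (rev s)) => [|y D] /=.
  by case: x.
have -> : rev (y :: D) == [::] = false by rewrite -size_eq0 size_rev.
by rewrite andbF -cat_cons rev_cat.
Qed.

Lemma canon_trimE s : canon s -> trim s = s.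
Proof.
rewrite /canon /trim; case E: (rev s) => [|[x|] t] // _.
  by move: E => /(congr1 size); rewrite size_rev => /eqP; rewrite size_eq0 => /eqP.
by rewrite /= -E revK.
Qed.

Lemma trimK s : trim (trim s) = trim s.
Proof. exact/canon_trimE/canon_trim. Qed.

Lemma mkmon_eq s t : (mkmon s = mkmon t) <-> (trim s = trim t).
Proof.
split; first by move=> /(congr1 val).
move=> E; rewrite /mkmon; move: (canon_trim s) (canon_trim t); rewrite E.
by move=> p q; rewrite (bool_irrelevance p q).
Qed.

Lemma mkmon_val (m : mon n) : mkmon (val m) = m.
Proof. by case: m => s c; apply: val_inj; rewrite /= canon_trimE. Qed.

Lemma val_mkmon s : val (mkmon s) = trim s.
Proof. by []. Qed.

Lemma trim_rcons s : trim (rcons s None) = trim s.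
Proof. by rewrite /trim rev_rcons. Qed.

Lemma trim_cons_eq x y s t :
  (trim (x :: s) == trim (y :: t)) = (x == y) && (trim s == trim t).
Proof.
rewrite !trim_cons; case: x => [x|]; case: y => [y|] /=.
- by rewrite eqseq_cons.
- by case: ifP => /= _; rewrite ?andbF // eqseq_cons.
- by case: ifP => /= _; rewrite ?andbF // eqseq_cons.
case: ifP; case: ifP => //= /eqP A /eqP B.
- by rewrite A B eqxx.
- by rewrite B /=; apply/esym/negbTE/eqP => C; apply: A; rewrite -C.
- by rewrite A /=; apply/esym/negbTE/eqP => C; apply: B; rewrite C.
Qed.

Lemma trim_headE P : trim P = trim (head None P :: behead P).
Proof. by case: P => //=. Qed.

Lemma trim_nseq k : trim (nseq k None) = [::] :> seq (option 'I_n).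
Proof. by elim: k => //= k IH; rewrite trim_cons IH. Qed.

Lemma trim_cat_nseq s k : trim (s ++ nseq k None) = trim s.
Proof. elim: s => [|x s IH] /=; first exact: trim_nseq. by rewrite !trim_cons IH. Qed.

Lemma trim_mapSome (w : seq 'I_n) : trim (map Some w) = map Some w.
Proof. by elim: w => //= x w IH; rewrite trim_cons IH. Qed.

Lemma trim_decomp s : s = trim s ++ nseq (size s - size (trim s)) None.
Proof.
elim: s => [|x s IH] //=; rewrite trim_cons.
case: ifP => [/andP[/eqP-> /eqP E]|_] /=.
  by rewrite {1}IH E /= subn0.
by rewrite {1}IH.
Qed.

End Seqs.

Section Splits.
Variables (K : fieldType) (n : nat).
Implicit Types (s t a P : seq (option 'I_n)).
Notation sq := (seq (option 'I_n)).

Lemma splits_rcons s :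
  splits (rcons s None) = [seq (rcons p.1 None, rcons p.2 None) | p <- splits s].
Proof.
elim: s => [|[x|] s IH] //=; rewrite IH -?map_comp //.
by rewrite map_cat -!map_comp.
Qed.

Lemma sum_splits_cat_nseq (G : sq -> sq -> K) s k :
  (forall p q, G (rcons p None) (rcons q None) = G p q) ->
  \sum_(p <- splits (s ++ nseq k None)) G p.1 p.2 = \sum_(p <- splits s) G p.1 p.2.
Proof.
move=> HG; elim: k s => [|k IH] s; first by rewrite cats0.
rewrite -cat_rcons IH splits_rcons big_map; apply: eq_bigr => p _ /=; exact: HG.
Qed.

Lemma Rmul_seq (f g : Rser K n) s :
  Rmul f g (mkmon s) = \sum_(p <- splits s) f (mkmon p.1) * g (mkmon p.2).
Proof.
rewrite /Rmul val_mkmon [in RHS](trim_decomp s).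
rewrite (@sum_splits_cat_nseq (fun a b => f (mkmon a) * g (mkmon b))) //.
by move=> p q /=; rewrite !(proj2 (mkmon_eq (rcons _ None) _) (trim_rcons _)).
Qed.

Lemma sum_splits_swap (G : sq -> sq -> K) s :
  \sum_(p <- splits s) G p.1 p.2 = \sum_(p <- splits s) G p.2 p.1.
Proof.
elim: s G => [|[x|] s IH] G /=; rewrite ?big_cat ?big_map /=.
- by rewrite !big_seq1.
- rewrite addrC; congr (_ + _).
  + exact: (IH (fun a b => G (None :: a) (Some x :: b))).
  + exact: (IH (fun a b => G (Some x :: a) (None :: b))).
- exact: (IH (fun a b => G (None :: a) (None :: b))).
Qed.

Lemma Rmul_comm (f g : Rser K n) : Rmul f g = Rmul g f.
Proof.
apply: functional_extensionality_dep => m; rewrite /Rmul (@sum_splits_swap (fun a b => f (mkmon a) * g (mkmon b))).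
by apply: eq_bigr => p _; rewrite mulrC.
Qed.

Fixpoint subm P s : bool :=
  match P with
  | [::] => true
  | y :: P' => ((y == None) || (y == head None s)) && subm P' (behead s)
  end.

Fixpoint splitof P s : sq * sq :=
  match s with
  | [::] => ([::], [::])
  | x :: t => let p := splitof (behead P) t in
              if head None P == None then (None :: p.1, x :: p.2)
              else (x :: p.1, None :: p.2)
  end.

Lemma subm_cons P x t :
  subm P (x :: t) = ((head None P == None) || (head None P == x)) && subm (behead P) t.
Proof. by case: P. Qed.

Lemma subm_nil P : subm P [::] = (trim P == [::]).
Proof.
elim: P => [|y P IH] //=; rewrite trim_cons IH orbb.
by case: y => [y|] //=; case: (trim P == [::]).
Qed.

Lemma count_splits (G : sq -> sq -> K) s P :
  \sum_(p <- splits s) (if trim p.1 == trim P then G p.1 p.2 else 0) =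
  if subm P s then G (splitof P s).1 (splitof P s).2 else 0.
Proof.
elim: s G P => [|x s IH] G P.
  by rewrite /= big_seq1 subm_nil /= eq_sym.
rewrite subm_cons /=.
under eq_bigr do rewrite [trim P]trim_headE.
move: (head None P) (behead P) => y P'.
case: x => [x|]; rewrite ?big_cat !big_map /=.
- under eq_bigr do rewrite trim_cons_eq.
  under [X in _ + X]eq_bigr do rewrite trim_cons_eq.
  case: y => [y|] /=; rewrite big1_eq.
  + case: (eqVneq x y) => [<-|hx] /=.
    * by rewrite eqxx /= addr0; exact: (IH (fun a b => G (Some x :: a) (None :: b)) P').
    * have E1 : (Some x == Some y) = false by apply/negbTE; apply: contra hx => /eqP[->].
      have E2 : (Some y == Some x) = false by rewrite eq_sym.
      by rewrite E1 E2 /= addr0 big1.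
  + by rewrite add0r; exact: (IH (fun a b => G (None :: a) (Some x :: b)) P').
- under eq_bigr do rewrite trim_cons_eq.
  rewrite orbb; case: y => [y|] /=.
  + by rewrite big1.
  + exact: (IH (fun a b => G (None :: a) (None :: b)) P').
Qed.

End Splits.

Section Ops.
Variables (K : fieldType) (n : nat).
Implicit Types (s t a P : seq (option 'I_n)) (f g : Rser K n) (u v w : word n).
Notation sq := (seq (option 'I_n)).

Lemma mkmon_trim s : mkmon (trim s) = mkmon s.
Proof. by apply/mkmon_eq; rewrite trimK. Qed.

Lemma Rsigma_mkmon f s :
  Rsigma f (mkmon s) = if head None s is Some _ then 0 else f (mkmon (behead s)).
Proof.
rewrite /Rsigma val_mkmon; case: s => [|[x|] s] //=; rewrite trim_cons //=.
case: ifP => [/eqP E|_] //=; last by rewrite mkmon_trim.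
by congr f; apply/mkmon_eq; rewrite E.
Qed.

Lemma iter_sigma k f s :
  iter k (@Rsigma K n) f (mkmon s) =
  if all (fun o => o == None) (take k s) then f (mkmon (drop k s)) else 0.
Proof.
elim: k s => [|k IH] s; first by rewrite take0 drop0.
rewrite iterS Rsigma_mkmon; case: s => [|[x|] s] //=.
Qed.

End Ops.

Lemma sum_ord_eq1 (K : fieldType) (m k : nat) (F : nat -> K) :
  \sum_(i < m) (if (i : nat) == k then F (i : nat) else 0) = if (k < m)%N then F k else 0.
Proof.
case: ltnP => H.
  rewrite (bigD1 (Ordinal H)) //= eqxx big1 ?addr0 // => j /= hj.
  by case: eqP => // E; move: hj; apply: contraNeq => _; apply/eqP/val_inj.
by rewrite big1 // => j _; case: eqP => // E; move: (ltn_ord j); rewrite E ltnNge H.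
Qed.

Section FOps.
Variables (K : fieldType) (n : nat).
Implicit Types (f g X : Fser K n) (u v w : word n).

Definition Fdelta u : Fser K n := fun w => if w == u then 1 else 0.
Definition Fsc (c : K) f : Fser K n := Fmul (fun w => if w == [::] then c else 0) f.
Definition Fsumn (B : nat) (h : nat -> Fser K n) : Fser K n :=
  fun w => \sum_(e < B) h e w.

Lemma Fmul_deltal u X w :
  Fmul (Fdelta u) X w = if take (size u) w == u then X (drop (size u) w) else 0.
Proof.
rewrite /Fmul /Fdelta.
transitivity (\sum_(i < (size w).+1)
   (if (i : nat) == size u then (if take (size u) w == u then X (drop (size u) w) else 0) else 0)).
  apply: eq_bigr => i _; case: (eqVneq (i : nat) (size u)) => [->|hi].
    by case: ifP; rewrite ?mul1r ?mul0r.
  case: eqP => E; rewrite ?mul0r //; move: hi; rewrite -E size_take.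
  case: ltnP => h; first by rewrite eqxx.
  have -> : (i : nat) == size w by rewrite eqn_leq h andbT -ltnS.
  by [].
rewrite (@sum_ord_eq1 K _ (size u) (fun _ => if take (size u) w == u then X (drop (size u) w) else 0)).
rewrite ltnS; case: leqP => // h.
by case: eqP => // E; move/(congr1 size): E; rewrite size_take_min => E; move: h; rewrite -E ltnNge geq_minr.
Qed.

Lemma Fmul_deltar1 z X w :
  Fmul X (Fdelta [:: z]) w =
  if w is x :: _ then (if last x w == z then X (belast x (behead w)) else 0) else 0.
Proof.
case: (lastP w) => [|w' x]; first by rewrite /Fmul big_ord_recr big_ord0 /= add0r /Fdelta mulr0.
rewrite /Fmul /Fdelta size_rcons.
transitivity (\sum_(i < (size w').+2)
   (if (i : nat) == size w' then (if x == z then X w' else 0) else 0)).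
  apply: eq_bigr => i _; case: (eqVneq (i : nat) (size w')) => [->|hi].
    rewrite -cats1 drop_size_cat // take_size_cat //.
    case: (eqVneq x z) => [->|h]; rewrite ?eqxx ?mulr1 //.
    by rewrite eqseq_cons (negbTE h) mulr0.
  case: eqP => E; rewrite ?mulr0 //; exfalso; move/negP: hi; apply.
  move/(congr1 size): E; rewrite size_drop size_rcons /= => h2.
  move: (ltn_ord i) => h1; apply/eqP; lia.
rewrite (@sum_ord_eq1 K _ (size w') (fun _ => if x == z then X w' else 0)).
rewrite ltnS leqnSn; case: w' => [|y w'] //=.
by rewrite last_rcons belast_rcons.
Qed.

Lemma Fsc_eval c f w : Fsc c f w = c * f w.
Proof.
rewrite /Fsc /Fmul big_ord_recl /= take0 drop0 /= big1 ?addr0 // => i _.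
case: eqP => [E|]; last by rewrite mul0r.
move/(congr1 size): E; rewrite size_take_min /bump /= => E.
by move: (ltn_ord i) => h; exfalso; lia.
Qed.

End FOps.

Section FIdeal.
Variables (K : fieldType) (n : nat).
Implicit Types (f g X : Fser K n) (u v w : word n).

Definition Fsuml (T : Type) (r : seq T) (h : T -> Fser K n) : Fser K n :=
  fun w => \sum_(x <- r) h x w.

Lemma finsupp_delta u : F_finsupp (Fdelta K u).
Proof. by exists [:: u] => w; rewrite /Fdelta; case: (eqVneq w u) => [->|]; rewrite ?inE ?eqxx. Qed.

Lemma finsupp_const (c : K) : F_finsupp (fun w : word n => if w == [::] then c else 0).
Proof. by exists [:: [::]] => w; case: (eqVneq w [::]) => [->|]; rewrite ?inE ?eqxx. Qed.

Lemma finsupp_add f g : F_finsupp f -> F_finsupp g -> F_finsupp (Fadd f g).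
Proof.
move=> [s1 h1] [s2 h2]; exists (s1 ++ s2) => w; rewrite /Fadd mem_cat.
case: (eqVneq (f w) 0) => [->|/h1 -> //]; rewrite add0r => /h2 ->; exact: orbT.
Qed.

Lemma finsupp_hcomp d f : F_finsupp f -> F_finsupp (Fhcomp d f).
Proof. by move=> [s h]; exists s => w; rewrite /Fhcomp; case: ifP => _; [exact: h | rewrite eqxx]. Qed.

Lemma finsupp_mul f g : F_finsupp f -> F_finsupp g -> F_finsupp (Fmul f g).
Proof.
move=> [s1 h1] [s2 h2]; exists [seq x.1 ++ x.2 | x <- [seq (a, b) | a <- s1, b <- s2]] => w.
rewrite /Fmul => H.
case: (boolP [exists i : 'I_(size w).+1, f (take i w) * g (drop i w) != 0]); last first.
  move=> /existsPn Hn; exfalso; move: H; rewrite big1 ?eqxx // => i _.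
  by move: (Hn i); rewrite negbK => /eqP.
case/existsP => i; rewrite mulf_eq0 negb_or => /andP[a b].
rewrite -(cat_take_drop i w); apply/mapP; exists (take i w, drop i w) => //.
by apply/allpairsP; exists (take i w, drop i w); split => //; [exact: h1 | exact: h2].
Qed.


Lemma Fsuml_nil (T : Type) (h : T -> Fser K n) : Fsuml [::] h = @Fzero K n.
Proof. by apply: functional_extensionality_dep => w; rewrite /Fsuml big_nil. Qed.

Lemma Fsuml_cons (T : Type) x r (h : T -> Fser K n) :
  Fsuml (x :: r) h = Fadd (h x) (Fsuml r h).
Proof. by apply: functional_extensionality_dep => w; rewrite /Fsuml big_cons. Qed.

Variable I : Fser K n -> Prop.
Hypothesis HI : F_ideal I.

Lemma FI_suml (T : eqType) (r : seq T) (h : T -> Fser K n) :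
  (forall x, x \in r -> I (h x)) -> I (Fsuml r h).
Proof.
case: HI => _ H0 HD _ _.
elim: r => [|x r IH] Hr; first by rewrite Fsuml_nil.
rewrite Fsuml_cons; apply: HD; first by apply: Hr; rewrite inE eqxx.
by apply: IH => y hy; apply: Hr; rewrite inE hy orbT.
Qed.

Lemma FI_sc c f : I f -> I (Fsc c f).
Proof. by case: HI => _ _ _ HL _ Hf; apply: HL => //; exact: finsupp_const. Qed.

Lemma FI_deltal u f : I f -> I (Fmul (Fdelta K u) f).
Proof. by case: HI => _ _ _ HL _ Hf; apply: HL => //; exact: finsupp_delta. Qed.

Lemma FI_deltar u f : I f -> I (Fmul f (Fdelta K u)).
Proof. by case: HI => _ _ _ _ HR Hf; apply: HR => //; exact: finsupp_delta. Qed.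

End FIdeal.

Section FDecomp.
Variables (K : fieldType) (n : nat).
Implicit Types (f g X : Fser K n) (u v w : word n).

Lemma Fhcomp_decomp f : F_finsupp f ->
  exists B, f = Fsuml (iota 0 B) (fun d => Fhcomp d f).
Proof.
move=> [s hs]; exists (\max_(w <- s) (size w).+1)%N.
apply: functional_extensionality_dep => w; rewrite /Fsuml /Fhcomp.
case: (eqVneq (f w) 0) => [E|/hs ws].
  by rewrite big1 // => d _; case: ifP.
rewrite (bigD1_seq (size w)) /= ?iota_uniq ?eqxx //; last first.
  by rewrite mem_iota add0n /=; exact: (@leq_bigmax_seq _ s xpredT (fun w => (size w).+1) w ws isT).
rewrite big1 ?addr0 // => d hd; case: (eqVneq (size w) d) => [E|]; last by []. by move: hd; rewrite E eqxx.
Qed.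

Lemma Fmul_suml_l (T : Type) r (h : T -> Fser K n) g :
  Fmul (Fsuml r h) g = Fsuml r (fun x => Fmul (h x) g).
Proof.
apply: functional_extensionality_dep => w; rewrite /Fsuml /Fmul.
rewrite (exchange_big_dep xpredT) //=; apply: eq_bigr => i _.
by rewrite big_distrl.
Qed.

Lemma Fmul_suml_r (T : Type) r (h : T -> Fser K n) g :
  Fmul g (Fsuml r h) = Fsuml r (fun x => Fmul g (h x)).
Proof.
apply: functional_extensionality_dep => w; rewrite /Fsuml /Fmul.
rewrite (exchange_big_dep xpredT) //=; apply: eq_bigr => i _.
by rewrite big_distrr.
Qed.

End FDecomp.


Section RIdeal.
Variables (K : fieldType) (n : nat).
Implicit Types (f g : Rser K n) (m : mon n) (s : seq (option 'I_n)).

Definition Rsuml (T : Type) (r : seq T) (h : T -> Rser K n) : Rser K n :=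
  fun m => \sum_(x <- r) h x m.

Lemma Rsuml_nil (T : Type) (h : T -> Rser K n) : Rsuml [::] h = @Rzero K n.
Proof. by apply: functional_extensionality_dep => w; rewrite /Rsuml big_nil. Qed.

Lemma Rsuml_cons (T : Type) x r (h : T -> Rser K n) :
  Rsuml (x :: r) h = Radd (h x) (Rsuml r h).
Proof. by apply: functional_extensionality_dep => w; rewrite /Rsuml big_cons. Qed.

Lemma RI_suml (J : Rser K n -> Prop) (T : eqType) (r : seq T) (h : T -> Rser K n) :
  R_ideal J -> (forall x, x \in r -> J (h x)) -> J (Rsuml r h).
Proof.
case=> _ H0 HD _.
elim: r => [|x r IH] Hr; first by rewrite Rsuml_nil.
rewrite Rsuml_cons; apply: HD; first by apply: Hr; rewrite inE eqxx.
by apply: IH => y hy; apply: Hr; rewrite inE hy orbT.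
Qed.

Lemma R_gen_ideal (S J : Rser K n -> Prop) :
  R_ideal J -> (forall g, S g -> J g) -> R_ideal (R_gen S).
Proof.
move=> HJ HS; split.
- by move=> f Hf; case: (HJ) => H _ _ _; apply: H; apply: Hf.
- by move=> J' [].
- by move=> f g Hf Hg J' HJ' HS'; case: (HJ') => _ _ HD _; apply: HD; [apply: Hf | apply: Hg].
- by move=> a f ha Hf J' HJ' HS'; case: (HJ') => _ _ _ HM; apply: HM => //; apply: Hf.
Qed.

Lemma R_gen_sub (S : Rser K n -> Prop) g : S g -> R_gen S g.
Proof. by move=> Sg J _ HS; exact: HS. Qed.

Lemma Rmul_suml_l (T : Type) r (h : T -> Rser K n) g :
  Rmul (Rsuml r h) g = Rsuml r (fun x => Rmul (h x) g).
Proof.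
apply: functional_extensionality_dep => m; rewrite /Rsuml /Rmul.
rewrite (exchange_big_dep xpredT) //=; apply: eq_bigr => i _.
by rewrite big_distrl.
Qed.

Lemma allSome_map (w : word n) : all (fun o : option 'I_n => o != None) (map Some w).
Proof. by elim: w. Qed.

Lemma map_pmap_allSome s : all (fun o : option 'I_n => o != None) s -> map Some (pmap id s) = s.
Proof. by elim: s => [|[x|] s IH] //= /IH ->. Qed.

Lemma pmap_mapSome (w : word n) : pmap id (map Some w) = w.
Proof. by elim: w => //= x w ->. Qed.

Lemma Riota_mapSome (f : Fser K n) (w : word n) : Riota f (mkmon (map Some w)) = f w.
Proof. by rewrite /Riota val_mkmon trim_mapSome allSome_map pmap_mapSome. Qed.

Lemma Riota_add (f g : Fser K n) : Riota (Fadd f g) = Radd (Riota f) (Riota g).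
Proof. by apply: functional_extensionality_dep => m; rewrite /Riota /Radd /Fadd; case: ifP; rewrite ?addr0. Qed.

Lemma Riota_zero : Riota (@Fzero K n) = @Rzero K n.
Proof. by apply: functional_extensionality_dep => m; rewrite /Riota; case: ifP. Qed.

Lemma Riota_suml (T : Type) r (h : T -> Fser K n) :
  Riota (Fsuml r h) = Rsuml r (fun x => Riota (h x)).
Proof.
elim: r => [|x r IH]; first by rewrite Fsuml_nil Rsuml_nil Riota_zero.
by rewrite Fsuml_cons Rsuml_cons Riota_add IH.
Qed.

Lemma count_allSome s : all (fun o : option 'I_n => o != None) s ->
  count (fun o : option 'I_n => o != None) s = size (pmap id s).
Proof. by elim: s => [|[x|] s IH] //= /IH ->. Qed.

Lemma Riota_hcomp d (f : Fser K n) : Riota (Fhcomp d f) = Rhcomp d (Riota f).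
Proof.
apply: functional_extensionality_dep => m; rewrite /Riota /Rhcomp /Fhcomp /mdeg.
case: ifP => H; first by rewrite count_allSome. by case: ifP.
Qed.

Lemma Riota_finsupp (f : Fser K n) : F_finsupp f -> R_finsupp (Riota f).
Proof.
move=> [S hS]; exists [seq mkmon (map Some w) | w <- S] => m; rewrite /Riota.
case: ifP => [H /hS hw|]; last by rewrite eqxx.
apply/mapP; exists (pmap id (val m)) => //.
by rewrite map_pmap_allSome // mkmon_val.
Qed.

Lemma Rsigma_finsupp f : R_finsupp f -> R_finsupp (Rsigma f).
Proof.
move=> [S hS]; exists [seq mkmon (None :: val p) | p <- S] => m.
rewrite -(mkmon_val m) Rsigma_mkmon; case E: (val m) => [|[x|] t] //=.
- move/hS => h; apply/mapP; exists (mkmon [::]) => //.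
  by apply/mkmon_eq.
- by rewrite eqxx.
- move/hS => h; apply/mapP; exists (mkmon t) => //.
  by apply/mkmon_eq; rewrite val_mkmon !trim_cons trimK.
Qed.

Lemma iter_sigma_finsupp k f : R_finsupp f -> R_finsupp (iter k (@Rsigma K n) f).
Proof. by elim: k => //= k IH /IH; exact: Rsigma_finsupp. Qed.

End RIdeal.

Section SeqMore.
Variable n : nat.
Implicit Types (s t a b x y : seq (option 'I_n)).

Lemma trim_congr o a b : trim a = trim b -> trim (o :: a) = trim (o :: b).
Proof. by move=> H; rewrite !trim_cons H. Qed.

Lemma splits_prop s q : q \in splits s ->
  [/\ size q.1 = size s, size q.2 = size s &
   forall j, ((nth None q.1 j == None) && (nth None q.2 j == nth None s j)) ||
             ((nth None q.2 j == None) && (nth None q.1 j == nth None s j))].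
Proof.
elim: s q => [|[x|] s IH] q /=.
- by rewrite inE => /eqP -> /=; split => // j; rewrite !nth_nil eqxx.
- rewrite mem_cat => /orP[] /mapP [[a b] /IH [h1 h2 h3] ->] /=.
  + by split; rewrite ?h1 ?h2 // => -[|j] //=; rewrite eqxx.
  + by split; rewrite ?h1 ?h2 // => -[|j] //=; rewrite eqxx.
- move=> /mapP [[a b] /IH [h1 h2 h3] ->] /=.
  by split; rewrite ?h1 ?h2 // => -[|j] //=.
Qed.

Lemma subm_take e s : subm (take e s) s.
Proof.
elim: s e => [|x s IH] [|e] //=.
by rewrite eqxx orbT IH.
Qed.

Lemma splitof_take e s :
  trim (splitof (take e s) s).1 = trim (take e s) /\
  trim (splitof (take e s) s).2 = trim (nseq e None ++ drop e s).
Proof.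
elim: s e => [|x s IH] e.
  by rewrite /= cats0 trim_nseq.
case: e => [|e] /=.
  have [h1 h2] := IH 0%N; rewrite take0 drop0 in h1 h2.
  by split; [rewrite trim_cons h1 | apply: trim_congr].
have [h1 h2] := IH e.
case: (eqVneq x None) => [->|hx] /=; split; try (apply: trim_congr; done).
Qed.

Lemma trim_cat x y : trim (x ++ y) = if trim y == [::] then trim x else x ++ trim y.
Proof.
elim: x => [|o x IH] /=; first by case: eqP.
rewrite trim_cons IH; case: (eqVneq (trim y) [::]) => hy /=; first by rewrite trim_cons.
have -> : (x ++ trim y == [::]) = false.
  by apply/negbTE; rewrite -size_eq0 size_cat addn_eq0 negb_and [size (trim y) == 0%N]size_eq0 hy orbT.
by rewrite andbF.
Qed.

Lemma trim_size_eq x : size (trim x) = size x -> trim x = x.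
Proof.
move=> H; rewrite {2}(trim_decomp x) H subnn /=; by rewrite cats0.
Qed.

Lemma size_trim_le x : (size (trim x) <= size x)%N.
Proof. by rewrite {2}(trim_decomp x) size_cat leq_addr. Qed.

Lemma nth_trim x j : nth None (trim x) j = nth None x j.
Proof.
rewrite {2}(trim_decomp x) nth_cat; case: ltnP => // h.
by rewrite nth_nseq if_same nth_default.
Qed.

End SeqMore.

Section IotaMul.
Variables (K : fieldType) (n : nat).
Implicit Types (s t a b : seq (option 'I_n)).
Notation allS := (all (fun o : option 'I_n => o != None)).
Notation allN := (all (fun o : option 'I_n => o == None)).

Lemma Riota_mkmon (f : Fser K n) s :
  Riota f (mkmon s) = if allS (trim s) then f (pmap id (trim s)) else 0.
Proof. by []. Qed.

Lemma size_pmap_allS s : allS s -> size (pmap id s) = size s.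
Proof. by elim: s => [|[x|] s IH] //= /IH ->. Qed.

Lemma key_split (p q : Fser K n) e s x :
  (forall w, p w != 0 -> size w = e) -> x \in splits s ->
  Riota p (mkmon x.1) * iter e (@Rsigma K n) (Riota q) (mkmon x.2) != 0 ->
  trim x.1 = trim (take e s).
Proof.
move=> hp /splits_prop [s1 s2 s3]; rewrite mulf_eq0 negb_or => /andP [].
rewrite Riota_mkmon iter_sigma; case: ifP => [hA|]; last by rewrite eqxx.
move=> /hp hsz; case: ifP => [hB _|]; last by rewrite eqxx.
rewrite size_pmap_allS // in hsz.
have he : (e <= size s)%N by rewrite -hsz -s1 size_trim_le.
suff E : trim x.1 = take e s by rewrite -E trimK.
apply: (@eq_from_nth _ None); first by rewrite size_take_min hsz; lia.
move=> j; rewrite hsz => hj; rewrite nth_take // nth_trim.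
have hnn : nth None x.1 j != None.
  by rewrite -nth_trim; move/allP: hA; apply; apply: mem_nth; rewrite hsz.
move: (s3 j); rewrite (negbTE hnn) /= => /andP [_ /eqP] //.
Qed.

Lemma Fmul_homog (p q : Fser K n) e w :
  (forall w, p w != 0 -> size w = e) -> Fmul p q w = p (take e w) * q (drop e w).
Proof.
move=> hp; rewrite /Fmul.
transitivity (\sum_(i < (size w).+1) (if (i : nat) == e then p (take e w) * q (drop e w) else 0)).
  apply: eq_bigr => i _; case: (eqVneq (i : nat) e) => [->|hi] //.
  case: (eqVneq (p (take i w)) 0) => [->|/hp]; first by rewrite mul0r.
  by rewrite size_take_min => E; move: hi (ltn_ord i); rewrite -E; lia.
rewrite (@sum_ord_eq1 K _ e (fun _ => p (take e w) * q (drop e w))); case: ifP => // h.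
case: (eqVneq (p (take e w)) 0) => [->|/hp]; first by rewrite mul0r.
by rewrite size_take_min; lia.
Qed.

Lemma Riota_mul (p q : Fser K n) e :
  (forall w, p w != 0 -> size w = e) ->
  Riota (Fmul p q) = Rmul (Riota p) (iter e (@Rsigma K n) (Riota q)).
Proof.
move=> hp; apply: functional_extensionality_dep => m.
rewrite -[in RHS](mkmon_val m) Rmul_seq.
set s := val m.
have cs : trim s = s by rewrite /s canon_trimE //; exact: valP.
set T := fun a b => Riota p (mkmon a) * iter e (@Rsigma K n) (Riota q) (mkmon b).
transitivity (\sum_(x <- splits s) (if trim x.1 == trim (take e s) then T x.1 x.2 else 0)); last first.
  rewrite big_seq [in RHS]big_seq; apply: eq_bigr => x hx.
  case: (eqVneq (trim x.1) (trim (take e s))) => // hne.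
  case: (eqVneq (T x.1 x.2) 0) => // /(key_split hp hx) E.
  by rewrite E eqxx in hne.
rewrite count_splits subm_take.
have [h1 h2] := splitof_take e s.
rewrite /T (proj2 (mkmon_eq _ _) h1) (proj2 (mkmon_eq _ _) h2) iter_sigma.
rewrite take_size_cat ?size_nseq // drop_size_cat ?size_nseq //.
have -> : allN (nseq e None) by elim: e {hp h1 h2 T}.
rewrite /Riota /=; change (sval m) with s; clearbody s.
case: (boolP (allS s)) => hA.
  have [w Es] : exists w, s = map Some w by exists (pmap id s); rewrite map_pmap_allSome.
  rewrite Es -map_take -map_drop !trim_mapSome !allSome_map !pmap_mapSome.
  exact: Fmul_homog.
case: ifP => hT; last by rewrite mul0r.
case: (eqVneq (p (pmap id (trim (take e s)))) 0) => [->|hpv]; first by rewrite mul0r.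
case: ifP => hD; last by rewrite mulr0.
exfalso; move: hA; apply/negP/negPn.
have hsz := hp _ hpv; rewrite size_pmap_allS // in hsz.
have E1 : trim (take e s) = take e s.
  apply: trim_size_eq; apply/eqP; rewrite eqn_leq size_trim_le hsz size_take_min geq_minl.
  by [].
rewrite -cs -{1}(cat_take_drop e s) trim_cat E1; case: ifP => _; first by rewrite -E1.
by rewrite all_cat -E1 hT hD.
Qed.

End IotaMul.

Section Exist.
Variables (K : fieldType) (n : nat) (J : Rser K n -> Prop).
Hypothesis HJ : R_graded_ideal J.
Hypothesis HS : forall f, J f -> J (Rsigma f).

Definition I0 : Fser K n -> Prop := fun f => F_finsupp f /\ J (Riota f).

Lemma J_iter k f : J f -> J (iter k (@Rsigma K n) f).
Proof. by elim: k => //= k IH /IH; exact: HS. Qed.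

Lemma hcomp_homog e (a : Fser K n) w : Fhcomp e a w != 0 -> size w = e.
Proof. by rewrite /Fhcomp; case: (eqVneq (size w) e) => // _; rewrite eqxx. Qed.

Lemma I0_graded : F_graded_ideal I0.
Proof.
case: HJ => [[JF J0 JD JM] JH].
have Rid : R_ideal J by [].
split; last first.
  by move=> f d [hf Jf]; split; [exact: finsupp_hcomp | rewrite Riota_hcomp; exact: JH].
split.
- by move=> f [].
- split; first by exists [::] => w; rewrite /Fzero eqxx.
  by rewrite Riota_zero.
- move=> f g [hf Jf] [hg Jg]; split; first exact: finsupp_add.
  by rewrite Riota_add; exact: JD.
- move=> a f ha [hf Jf]; split; first exact: finsupp_mul.
  have [B ->] := Fhcomp_decomp ha.
  rewrite Fmul_suml_l Riota_suml; apply: RI_suml => // e _.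
  rewrite (Riota_mul _ (@hcomp_homog e a)); apply: JM; last exact: J_iter.
  by apply: Riota_finsupp; exact: finsupp_hcomp.
- move=> f a ha [hf Jf]; split; first exact: finsupp_mul.
  have [B ->] := Fhcomp_decomp hf.
  rewrite Fmul_suml_l Riota_suml; apply: RI_suml => // e _.
  rewrite (Riota_mul _ (@hcomp_homog e f)) Rmul_comm; apply: JM.
    by apply: iter_sigma_finsupp; exact: Riota_finsupp.
  by rewrite Riota_hcomp; exact: JH.
Qed.

Hypothesis Hgen : forall f, J f <-> R_gen (Jgens J) f.

Lemma count_lt_notall (T : Type) (a : pred T) (s : seq T) : ~~ all a s -> (count a s < size s)%N.
Proof.
elim: s => [|x s IH] //=; rewrite negb_and; case: (a x) => /=.
  by move/IH; rewrite add1n ltnS.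
by move=> _; rewrite add0n ltnS count_size.
Qed.

Lemma dsum_iota f : dsum_Jdd J f ->
  f = Riota (fun w => f (mkmon (map Some w))).
Proof.
move=> [hf hd]; apply: functional_extensionality_dep => m; rewrite /Riota.
case: ifP => hA; first by rewrite map_pmap_allSome // mkmon_val.
have [_ hin _] := hd (mdeg m).
have := hin m; rewrite /Rhcomp eqxx => -> //.
by rewrite /mdeg; apply: count_lt_notall; rewrite hA.
Qed.

Lemma J_Lideal f : J f <-> Lideal I0 f.
Proof.
case: HJ => [[JF J0 JD JM] JH]; split.
- move=> /Hgen Hf; apply: Hf.
    apply: (@R_gen_ideal _ _ _ J) => //; move=> g [k [h [[hh Jh] ->]]]; exact: J_iter.
  move=> g [k [f0 [Hd ->]]].
  apply: R_gen_sub; exists k; exists (fun w => f0 (mkmon (map Some w))).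
  split; last exact: (congr1 _ (dsum_iota Hd)).
  split; last first.
    rewrite -(dsum_iota Hd); apply: (proj2 (Hgen _)); apply: R_gen_sub; exists 0%N, f0; by split.
  move: Hd; rewrite /dsum_Jdd /R_finsupp => -[[S hS] _]; exists [seq pmap id (val p) | p <- S] => w /hS h.
  by apply/mapP; exists (mkmon (map Some w)) => //; rewrite val_mkmon trim_mapSome pmap_mapSome.
- move=> Hf; apply: Hf => //; move=> g [k [h [[hh Jh] ->]]]; exact: J_iter.
Qed.

End Exist.


Section WSeq.
Variable n : nat.
Notation sq := (seq (option 'I_n)).
Implicit Types (a P : sq) (w : word n).
Notation allN := (all (fun o : option 'I_n => o == None)).

Fixpoint compw a w : sq :=
  match w with
  | [::] => [::]
  | x :: w' => (if head None a == None then Some x else None) :: compw (behead a) w'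
  end.

Fixpoint matchw a w : bool :=
  match w with
  | [::] => allN a
  | x :: w' => ((head None a == None) || (head None a == Some x)) && matchw (behead a) w'
  end.

Fixpoint disj a P : bool :=
  match a with
  | [::] => true
  | y :: a' => ((y == None) || (head None P == None)) && disj a' (behead P)
  end.

Fixpoint mergeP a P : sq :=
  match a with
  | [::] => P
  | y :: a' => (if y is Some _ then y else head None P) :: mergeP a' (behead P)
  end.

Lemma disj_cons a P :
  disj a P = ((head None a == None) || (head None P == None)) && disj (behead a) (behead P).
Proof. by case: a. Qed.

Lemma head_mergeP a P :
  head None (mergeP a P) = if head None a is Some y then Some y else head None P.
Proof. by case: a => [|[y|] a]. Qed.

Lemma behead_mergeP a P : behead (mergeP a P) = mergeP (behead a) (behead P).
Proof. by case: a. Qed.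

Lemma allN_cons P : allN P = (head None P == None) && allN (behead P).
Proof. by case: P. Qed.

Lemma allN_mergeP a P : allN a && allN P = disj a P && allN (mergeP a P).
Proof.
elim: a P => [|y a IH] P /=; first by [].
rewrite [allN P]allN_cons; case: y => [y|] /=; first by rewrite !andbF.
by case: (head None P == None); rewrite /= ?andbF // IH.
Qed.

Lemma subm_nilN P : subm P [::] = allN P.
Proof. by elim: P => //= y P ->; rewrite orbb. Qed.

Lemma bool4 (h1 h2 h3 h4 A B C D : bool) :
  A && B = C && D -> h1 && h2 = h3 && h4 ->
  (h1 && A) && (h2 && B) = (h3 && C) && (h4 && D).
Proof. by case: h1; case: h2; case: h3; case: h4; case: A; case: B; case: C; case: D. Qed.

Lemma matchw_subm a P w :
  matchw a w && subm P (compw a w) = disj a P && matchw (mergeP a P) w.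
Proof.
elim: w a P => [|x w IH] a P /=.
  by rewrite subm_nilN allN_mergeP.
rewrite subm_cons disj_cons head_mergeP behead_mergeP.
apply: bool4; first exact: IH.
move: (head None a) (head None P) => [ya|] [yp|] //=; rewrite ?orbF ?andbT ?andbF //.
Qed.

Lemma splitof_compw a P w : (splitof P (compw a w)).2 = compw (mergeP a P) w.
Proof.
elim: w a P => [|x w IH] a P //=.
rewrite head_mergeP behead_mergeP IH.
by move: (head None a) (head None P) => [ya|] [yp|].
Qed.

End WSeq.

Section Wf.
Variables (K : fieldType) (n : nat).
Notation sq := (seq (option 'I_n)).
Implicit Types (a P : sq) (w : word n) (g b : Rser K n).

Definition Wf (d : nat) a g : Fser K n :=
  fun w => if (size w == d) && matchw a w then g (mkmon (compw a w)) else 0.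

Lemma fun_decomp b (U : seq (mon n)) : uniq U -> (forall m, b m != 0 -> m \in U) ->
  forall m, b m = \sum_(p <- U) (if m == p then b p else 0).
Proof.
move=> hU hb m; case: (boolP (m \in U)) => hm.
  rewrite (bigD1_seq m) //= eqxx big1 ?addr0 // => p hp.
  by rewrite eq_sym (negbTE hp).
have -> : b m = 0 by apply/eqP; apply: contraR hm; exact: hb.
rewrite big_seq big1 // => p hp; case: (eqVneq m p) => // E.
by rewrite E hp in hm.
Qed.

Lemma mkmon_eqb s (p : mon n) : (mkmon s == p) = (trim s == trim (val p)).
Proof.
rewrite -{1}(mkmon_val p); apply/eqP/eqP; first by move/mkmon_eq.
by move=> E; apply/mkmon_eq.
Qed.

Lemma Wf_Rmul d a b g (U : seq (mon n)) : uniq U -> (forall m, b m != 0 -> m \in U) ->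
  Wf d a (Rmul b g) =
  Fsuml U (fun p => Fsc (if disj a (val p) then b p else 0) (Wf d (mergeP a (val p)) g)).
Proof.
move=> hU hb; apply: functional_extensionality_dep => w; rewrite /Wf /Fsuml.
under eq_bigr do rewrite Fsc_eval.
case: ifP => hc.
- rewrite Rmul_seq.
  set c := compw a w.
  transitivity (\sum_(x <- splits c) \sum_(p <- U)
      (if trim x.1 == trim (val p) then b p * g (mkmon x.2) else 0)).
    apply: eq_bigr => x _; rewrite (fun_decomp hU hb (mkmon x.1)) mulr_suml.
    by apply: eq_bigr => p _; rewrite mkmon_eqb; case: (trim x.1 == trim (val p)); rewrite ?mul0r.
  rewrite exchange_big; apply: eq_bigr => p _.
  rewrite (@count_splits K _ (fun _ y => b p * g (mkmon y)) c (val p)) /c splitof_compw.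
  move/andP: hc => [hs hm]; have := matchw_subm a (val p) w; rewrite hm hs /= => ->.
  by case: (disj _ _); case: (matchw _ _); rewrite ?mulr0 ?mul0r.
- rewrite big1 // => p _.
  case E: ((size w == d) && matchw (mergeP a (val p)) w); last by rewrite mulr0.
  move/andP: E => [hs hm]; move: hc; rewrite hs /= => hc.
  have := matchw_subm a (val p) w; rewrite hc hm andbT /= => <-.
  by rewrite mul0r.
Qed.

End Wf.

Section WSeq2.
Variable n : nat.
Notation sq := (seq (option 'I_n)).
Implicit Types (a P : sq) (w : word n).
Notation allN := (all (fun o : option 'I_n => o == None)).
Notation allS := (all (fun o : option 'I_n => o != None)).

Lemma nth_behead_None a j : nth None (behead a) j = nth None a j.+1.
Proof. by case: a => [|x a] //=; rewrite !nth_nil. Qed.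

Lemma matchw_drop a w : matchw a w -> allN (drop (size w) a).
Proof.
elim: w a => [|x w IH] a /=; first by rewrite drop0.
by case/andP => _ /IH; case: a.
Qed.

Lemma compw_rcons a w x :
  compw a (rcons w x) = rcons (compw a w) (if nth None a (size w) == None then Some x else None).
Proof.
elim: w a => [|y w IH] a /=; first by case: a.
by rewrite IH nth_behead_None.
Qed.

Lemma matchw_rcons a w x :
  matchw a (rcons w x) =
  [&& matchw (take (size w) a) w,
      (nth None a (size w) == None) || (nth None a (size w) == Some x)
    & allN (drop (size w).+1 a)].
Proof.
elim: w a => [|y w IH] a /=.
  by case: a => [|z a] //=; rewrite drop0 andbC.
case: a => [|z a] /=; rewrite IH andbA //.
by rewrite nth_nil /= !andbT.
Qed.

Lemma compw_take a w : compw (take (size w) a) w = compw a w.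
Proof. by elim: w a => [|x w IH] [|y a] //=; rewrite IH. Qed.

Lemma allS_compw a w : allS (compw a w) = allN (take (size w) a).
Proof.
elim: w a => [|x w IH] [|y a] //=.
by rewrite IH; case: y.
Qed.

Lemma compw_allN a w : allN (take (size w) a) -> compw a w = map Some w.
Proof.
elim: w a => [|x w IH] [|y a] //=; first by move=> _; rewrite (IH [::]) //; case: (size w).
by case/andP => /eqP -> /IH ->.
Qed.

Lemma matchw_allN a w : allN a -> matchw a w.
Proof. by elim: w a => [|x w IH] [|y a] //= => [|/andP [/eqP -> h]]; rewrite ?IH //; apply: IH. Qed.

End WSeq2.

Section WfGen.
Variables (K : fieldType) (n : nat).
Notation sq := (seq (option 'I_n)).
Implicit Types (a P : sq) (w : word n) (g b : Rser K n).
Notation allN := (all (fun o : option 'I_n => o == None)).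
Notation allS := (all (fun o : option 'I_n => o != None)).

Lemma Wf_sigma0 a g : Wf 0 a (Rsigma g) = Wf 0 a g.
Proof.
apply: functional_extensionality_dep => w; rewrite /Wf.
by case: w => [|x w] //=; rewrite Rsigma_mkmon.
Qed.

Lemma Wf_sigmaS d a g : Wf d.+1 a (Rsigma g) =
  if head None a is Some y then Fmul (Fdelta K [:: y]) (Wf d (behead a) g) else @Fzero K n.
Proof.
apply: functional_extensionality_dep => w.
case E: (head None a) => [y|]; last first.
  rewrite /Wf /Fzero; case: w => [|x w] //=; rewrite E /=.
  by case: ifP => // _; rewrite Rsigma_mkmon.
rewrite Fmul_deltal /Wf /=; case: w => [|x w] //=; rewrite E /= take0 drop0.
rewrite Rsigma_mkmon /= eqseq_cons andbT.
case: (eqVneq y x) => [->|h]; rewrite ?eqxx ?andbF //=.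
have -> : (Some y == Some x) = false by apply/negbTE; apply: contra h => /eqP [->].
by rewrite andbF.
Qed.

Lemma Fmul_deltar_rcons z (X : Fser K n) w x :
  Fmul X (Fdelta K [:: z]) (rcons w x) = if x == z then X w else 0.
Proof.
rewrite Fmul_deltar1; case: w => [|y w] //=.
by rewrite last_rcons belast_rcons.
Qed.

Lemma Fmul_deltar_nil z (X : Fser K n) : Fmul X (Fdelta K [:: z]) [::] = 0.
Proof. by rewrite Fmul_deltar1. Qed.

Lemma Wf_bad d a g : ~~ allN (drop d a) -> Wf d a g = @Fzero K n.
Proof.
move=> h; apply: functional_extensionality_dep => w; rewrite /Wf /Fzero.
case: eqP => // E; case: ifP => // /matchw_drop; rewrite E => h'.
by rewrite h' in h.
Qed.

Lemma Wf_iota0 a (h : Fser K n) :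
  Wf 0 a (Riota h) = if allN a then Fhcomp 0 h else @Fzero K n.
Proof.
apply: functional_extensionality_dep => w; rewrite /Wf /Fhcomp.
case: w => [|x w] /=; last by case: ifP.
by case: ifP.
Qed.

Lemma Wf_iotaS_Some d a z (h : Fser K n) :
  nth None a d = Some z -> allN (drop d.+1 a) ->
  Wf d.+1 a (Riota h) = Fmul (Wf d (take d a) (Riota h)) (Fdelta K [:: z]).
Proof.
move=> hz hd; apply: functional_extensionality_dep => w.
case: (lastP w) => [|w' x]; first by rewrite Fmul_deltar_nil /Wf.
rewrite Fmul_deltar_rcons /Wf size_rcons eqSS.
case: (eqVneq (size w') d) => [E|]; last by case: ifP.
rewrite matchw_rcons compw_rcons E hz hd /= andbT.
rewrite (proj2 (mkmon_eq _ _) (trim_rcons _)).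
rewrite -E compw_take E.
case: (eqVneq x z) => [->|hx]; first by rewrite eqxx andbT.
have -> : (Some z == Some x) = false by apply/negbTE; apply: contra hx => /eqP [->].
by rewrite andbF.
Qed.

Lemma Wf_iotaS_None d a (h : Fser K n) :
  nth None a d = None -> allN (drop d.+1 a) ->
  Wf d.+1 a (Riota h) = if allN (take d a) then Fhcomp d.+1 h else @Fzero K n.
Proof.
move=> hz hd; apply: functional_extensionality_dep => w.
case: (lastP w) => [|w' x]; first by rewrite /Wf /Fhcomp /Fzero; case: ifP.
rewrite /Wf size_rcons eqSS.
case: (eqVneq (size w') d) => [E|H]; last first.
  by case: ifP => _; rewrite /Fhcomp /Fzero // size_rcons eqSS (negbTE H).
rewrite matchw_rcons compw_rcons E hz hd /= andbT.
rewrite Riota_mkmon -cats1 trim_cat /= all_cat /= andbT.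
rewrite cats1 allS_compw E.
case hN: (allN (take d a)); last by case: ifP.
rewrite matchw_allN // (compw_allN (a := a)) ?E //.
by rewrite /Fhcomp size_rcons E eqxx -map_rcons pmap_mapSome.
Qed.

End WfGen.

Section Uniq.
Variables (K : fieldType) (n : nat) (I' : Fser K n -> Prop).
Hypothesis HI : F_graded_ideal I'.
Notation sq := (seq (option 'I_n)).

Lemma IF_zero : I' (@Fzero K n).
Proof. by case: HI => [[]]. Qed.

Lemma IF_hcomp d f : I' f -> I' (Fhcomp d f).
Proof. by case: HI => _ H; apply: H. Qed.

Lemma Wf_base h : I' h -> forall d (a : sq), I' (Wf d a (Riota h)).
Proof.
move=> Hh; elim=> [|d IH] a.
  by rewrite Wf_iota0; case: ifP => _; [exact: IF_hcomp | exact: IF_zero].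
case: (boolP (all (fun o : option 'I_n => o == None) (drop d.+1 a))) => hd; last first.
  by rewrite Wf_bad //; exact: IF_zero.
case E: (nth None a d) => [z|].
  by rewrite (Wf_iotaS_Some _ E hd); apply: FI_deltar; [case: HI | exact: IH].
by rewrite (Wf_iotaS_None _ E hd); case: ifP => _; [exact: IF_hcomp | exact: IF_zero].
Qed.

Lemma Wf_gen h : I' h -> forall k d (a : sq), I' (Wf d a (iter k (@Rsigma K n) (Riota h))).
Proof.
move=> Hh; elim=> [|k IH] d a; first exact: Wf_base.
rewrite iterS; case: d => [|d]; first by rewrite Wf_sigma0; exact: IH.
rewrite Wf_sigmaS; case: (head None a) => [y|]; last exact: IF_zero.
by apply: FI_deltal; [case: HI | exact: IH].
Qed.

Lemma Wf_nil_iota d (f : Fser K n) : Wf d [::] (Riota f) = Fhcomp d f.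
Proof.
apply: functional_extensionality_dep => w; rewrite /Wf /Fhcomp.
rewrite matchw_allN // andbT (compw_allN (a := [::])) ?Riota_mapSome //.
Qed.

Variable J : Rser K n -> Prop.
Hypothesis HJ : R_ideal J.
Hypothesis HJL : forall f, J f <-> Lideal I' f.

Lemma uniq_part f : F_finsupp f -> J (Riota f) -> I' f.
Proof.
move=> hf /HJL HL.
pose Q := fun g => J g /\ forall d (a : sq), I' (Wf d a g).
have HQ : R_ideal Q.
  rewrite /Q; case: (HJ) => JF J0 JD JM.
  split.
  - by move=> g [Jg _]; exact: JF.
  - split => // d a.
    have -> : Wf d a (@Rzero K n) = @Fzero K n.
      by apply: functional_extensionality_dep => w; rewrite /Wf; case: ifP.
    exact: IF_zero.
  - move=> g1 g2 [J1 W1] [J2 W2]; split; first exact: JD.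
    move=> d a; have -> : Wf d a (Radd g1 g2) = Fadd (Wf d a g1) (Wf d a g2).
      by apply: functional_extensionality_dep => w; rewrite /Wf /Fadd /Radd; case: ifP; rewrite ?addr0.
    by case: HI => [[_ _ HD _ _] _]; apply: HD.
  - move=> b g hb [Jg Wg]; split; first exact: JM.
    move=> d a; case: hb => S hS.
    rewrite (@Wf_Rmul K n d a b g (undup S)) ?undup_uniq //; last by move=> m /hS; rewrite mem_undup.
    apply: FI_suml; first by case: HI.
    by move=> p _; apply: FI_sc; [case: HI | exact: Wg].
have HQf : Q (Riota f).
  apply: HL => // g [k [h [Ih ->]]]; split.
    by apply/HJL; apply: R_gen_sub; exists k, h.
  by move=> d a; exact: Wf_gen.
have [B ->] := Fhcomp_decomp hf.
apply: FI_suml; first by case: HI.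
by move=> d _; rewrite -Wf_nil_iota; case: HQf => _; apply.
Qed.

End Uniq.

Local Close Scope ring_scope.

Theorem mainTheorem6 (K : fieldType) (n : nat) (J : Rser K n -> Prop) :
  R_graded_ideal J ->
  (forall f, J f -> J (Rsigma f)) ->
  (forall f, J f <-> R_gen (Jgens J) f) ->
  exists I : Fser K n -> Prop,
    [/\ F_graded_ideal I,
        (forall f, J f <-> Lideal I f)
      & forall I' : Fser K n -> Prop,
          F_graded_ideal I' -> (forall f, J f <-> Lideal I' f) ->
          forall f, I' f <-> I f].
Proof.
move=> HJ HS Hgen; exists (I0 J); split.
- exact: I0_graded.
- exact: J_Lideal.
- move=> I' HI HJL f; split.
  + move=> If; split; first by case: HI => [[HF _ _ _ _] _]; exact: HF.
    by apply/HJL; apply: R_gen_sub; exists 0%N, f.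
  + move=> [hf Jf]; apply: (uniq_part HI _ HJL hf Jf).
    by case: HJ.
Qed.
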